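(* Let $\mathcal G$ be a molecular graph and let $\mathcal S$ be a subset of its molecules such that the subgraph of $\mathcal G$ induced on $\mathcal S$ is doubly connected. Let $\mathcal G/\mathcal S$ be the quotient graph obtained from $\mathcal G$ by replacing all molecules of $\mathcal S$ by a single new molecule, deleting all edges with both endpoints in $\mathcal S$, and reattaching every edge of $\mathcal G$ joining a molecule of $\mathcal S$ to a molecule outside $\mathcal S$ to this new molecule (keeping its type). Then $\mathcal G$ is doubly connected if and only if $\mathcal G/\mathcal S$ is doubly connected.
   Context: A molecular graph is a finite multigraph whose vertices are called molecules and each of whose edges joins two distinct molecules and is either a diffusive edge or a blue solid edge (parallel edges are allowed). A molecular graph is doubly connected if there exist two disjoint sets of edges, $\mathcal B_{black}$ consisting only of diffusive edges and $\mathcal B_{blue}$ consisting only of blue solid or diffusive edges, such that each of $\mathcal B_{black}$ and $\mathcal B_{blue}$ contains a spanning tree of the set of all molecules. The subgraph induced on a set $\mathcal S$ of molecules consists of the molecules in $\mathcal S$ and all edges with both endpoints in $\mathcal S$. *)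

(* Defs.v *)
From mathcomp Require Import all_boot.
Set Implicit Arguments. Unset Strict Implicit. Unset Printing Implicit Defensive.

(* A molecular graph: finite multigraph with molecules V and edges E; each
   edge has two (distinct) endpoints and a type: diffusive (true) or blue
   solid (false). *)
Record molgraph (V E : finType) := MolGraph {
  ends : E -> V * V;
  diffusive : E -> bool;
  ends_neq : forall e, (ends e).1 != (ends e).2
}.

Section Generic.
Variables (V E : finType) (endp : E -> V * V).

Definition adj (T : {set E}) : rel V :=
  fun u v => [exists e in T, (endp e == (u, v)) || (endp e == (v, u))].

Definition spans (W : {set V}) (T : {set E}) : Prop :=
  forall u v, u \in W -> v \in W -> connect (adj T) u v.

(* T is a spanning tree of W: a nonempty vertex set W, spanned by T, and T is
   minimal with this property (tree = minimally connected graph). *)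
Definition spanning_tree (W : {set V}) (T : {set E}) : Prop :=
  W != set0 /\ spans W T /\ forall e, e \in T -> ~ spans W (T :\ e).

Definition doubly_connected_on (diff : E -> bool) (W : {set V}) (F : {set E}) : Prop :=
  exists Bblack Bblue : {set E},
    [/\ Bblack \subset F, Bblue \subset F, [disjoint Bblack & Bblue]
         & (forall e, e \in Bblack -> diff e)] /\
    (
        (exists2 T : {set E}, T \subset Bblack & spanning_tree W T) /\
        (exists2 T : {set E}, T \subset Bblue & spanning_tree W T)).
End Generic.

Section Mol.
Variables (V E : finType) (G : molgraph V E).

Definition doubly_connected : Prop :=
  doubly_connected_on (ends G) (diffusive G) [set: V] [set: E].

Definition inner_edges (S : {set V}) : {set E} :=
  [set e | ((ends G e).1 \in S) && ((ends G e).2 \in S)].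

Definition induced_doubly_connected (S : {set V}) : Prop :=
  doubly_connected_on (ends G) (diffusive G) S (inner_edges S).

(* Quotient G/S: molecules are [None] (the new molecule) and [Some x] for
   x outside S; edges are the edges of G not inside S, with endpoints in S
   redirected to [None]; edge types are kept. *)
Definition qmap (S : {set V}) (x : V) : option V :=
  if x \in S then None else Some x.

Definition quot_vertices (S : {set V}) : {set option V} :=
  None |: [set Some x | x in ~: S].

Definition quot_edges (S : {set V}) : {set E} := ~: inner_edges S.

Definition quot_ends (S : {set V}) (e : E) : option V * option V :=
  (qmap S (ends G e).1, qmap S (ends G e).2).

Definition quotient_doubly_connected (S : {set V}) : Prop :=
  doubly_connected_on (quot_ends S) (diffusive G) (quot_vertices S) (quot_edges S).
End Mol.

(* Main.v *)
Require Import Defs.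
From mathcomp Require Import all_boot.
Set Implicit Arguments. Unset Strict Implicit. Unset Printing Implicit Defensive.

Lemma connect_closed (T : finType) (e R : rel T) :
  reflexive R -> transitive R -> subrel e R -> subrel (connect e) R.
Proof.
move=> Rr Rt se x y /connectP [p]; elim: p x => [|z p IH] x /=.
  by move=> _ ->.
by case/andP=> exz pz ly; apply: (Rt z); [apply: se | apply: IH].
Qed.

Section Gen.
Variables (V E : finType) (endp : E -> V * V).

Lemma adj_sub (T1 T2 : {set E}) u v : T1 \subset T2 -> adj endp T1 u v -> adj endp T2 u v.
Proof.
move=> s /existsP [e /andP [eT H]]; apply/existsP; exists e.
by rewrite (subsetP s _ eT).
Qed.

Lemma spans_sub W (T1 T2 : {set E}) : T1 \subset T2 -> spans endp W T1 -> spans endp W T2.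
Proof.
move=> s sp u v uW vW; move: (sp u v uW vW); apply: connect_sub => a b ab.
by apply: connect1; apply: adj_sub ab.
Qed.

Definition spansb (W : {set V}) (T : {set E}) := [forall u, forall v, (u \in W) ==> (v \in W) ==> connect (adj endp T) u v].

Lemma spansbP W T : reflect (spans endp W T) (spansb W T).
Proof.
apply: (iffP forallP) => [H u v uW vW | H u].
  by have /forallP/(_ v) := H u; rewrite uW vW.
by apply/forallP => v; apply/implyP => uW; apply/implyP => vW; apply: H.
Qed.

Lemma st_exists W T : W != set0 -> spans endp W T ->
  exists2 T' : {set E}, T' \subset T & spanning_tree endp W T'.
Proof.
move=> W0 /spansbP sp; case: (minset_exists sp) => A /minsetP [PA minA] sAT.
exists A => //; split => //; split; first by apply/spansbP.
move=> e eA /spansbP H.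
have := minA _ H (subD1set A e) => /setP /(_ e); rewrite !inE eA eqxx /=.
by [].
Qed.

Lemma dc_onP diff W F :
  doubly_connected_on endp diff W F <->
  (W != set0 /\ exists B1 B2 : {set E},
     [/\ B1 \subset F, B2 \subset F, [disjoint B1 & B2]
       & (forall e, e \in B1 -> diff e)] /\ spans endp W B1 /\ spans endp W B2).
Proof.
split.
  case=> [B1 [B2 [H [[T1 s1 [W0 [sp1 _]]] [T2 s2 [_ [sp2 _]]]]]]].
  split => //; exists B1, B2; split => //; split.
    exact: spans_sub sp1.
  exact: spans_sub sp2.
case=> W0 [B1 [B2 [H [sp1 sp2]]]]; exists B1, B2; split => //; split.
  exact: st_exists.
exact: st_exists.
Qed.
End Gen.

Theorem claimA1 (V E : finType) (G : molgraph V E) (S : {set V}) :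
  induced_doubly_connected G S ->
  (doubly_connected G <-> quotient_doubly_connected G S).
Proof.
rewrite /induced_doubly_connected /doubly_connected /quotient_doubly_connected.
move/dc_onP => [S0 [C1 [C2 [[sC1 sC2 dC dfC] [spC1 spC2]]]]].
have [s0 s0S] : exists s0, s0 \in S by apply/set0Pn.
have qmapV : forall x, qmap S x \in quot_vertices S.
  move=> x; rewrite /qmap /quot_vertices; case: ifP => xS; rewrite !inE //.
  by apply/orP; right; apply/imsetP; exists x; rewrite // inE xS.
have qpre : forall a, a \in quot_vertices S -> exists x, qmap S x = a.
  move=> a; rewrite /quot_vertices !inE => /orP [/eqP -> | /imsetP [x]].
    by exists s0; rewrite /qmap s0S.
  by rewrite inE => xS ->; exists x; rewrite /qmap (negbTE xS).
have qS : forall x, (qmap S x == None) = (x \in S).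
  by move=> x; rewrite /qmap; case: ifP.
have inner_in : forall e, e \in inner_edges G S ->
    ((ends G e).1 \in S) && ((ends G e).2 \in S).
  by move=> e; rewrite inE.
split.
-
  move/dc_onP => [_ [B1 [B2 [[_ _ dB dfB] [sp1 sp2]]]]].
  have fw : forall B : {set E}, spans (ends G) [set: V] B ->
      spans (quot_ends G S) (quot_vertices S) (B :&: quot_edges G S).
    move=> B sp a b /qpre [x <-] /qpre [y <-].
    pose R := fun x y => connect (adj (quot_ends G S) (B :&: quot_edges G S)) (qmap S x) (qmap S y).
    apply: (@connect_closed _ _ R _ _ _ x y (sp x y (in_setT _) (in_setT _))).
    + by move=> z; apply: connect0.
    + by move=> z u w; apply: connect_trans.
    move=> u w /existsP [e /andP [eB H]]; rewrite /R.
    case eI: (e \in inner_edges G S).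
      move: (inner_in e eI) => /andP [h1 h2].
      have: (ends G e == (u, w)) || (ends G e == (w, u)) := H.
      case/orP => /eqP E1; rewrite E1 /= in h1 h2;
        by rewrite /qmap h1 h2 connect0.
    apply: connect1; apply/existsP; exists e.
    rewrite in_setI /quot_edges in_setC eI eB /= /quot_ends.
    by case/orP: H => /eqP ->; rewrite eqxx ?orbT.
  apply/dc_onP; split; first by apply/set0Pn; exists None; rewrite !inE.
  exists (B1 :&: quot_edges G S), (B2 :&: quot_edges G S); split; last by split; apply: fw.
  split; try by apply: subsetIr.
    by apply: disjointW dB; apply: subsetIl.
  by move=> e; rewrite inE => /andP [/dfB].
-
  move/dc_onP => [_ [B1 [B2 [[sB1 sB2 dB dfB] [sp1 sp2]]]]].
  have bw : forall B C : {set E}, B \subset quot_edges G S ->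
      spans (ends G) S C ->
      spans (quot_ends G S) (quot_vertices S) B ->
      spans (ends G) [set: V] (B :|: C).
    move=> B C sB spC spB x y _ _.
    have same : forall u w, qmap S u = qmap S w -> connect (adj (ends G) (B :|: C)) u w.
      move=> u w; rewrite /qmap; case: ifP => uS; case: ifP => wS //.
        by move=> _; apply: (spans_sub (subsetUr B C) spC).
      by case => ->; apply: connect0.
    case: (eqVneq (qmap S x) (qmap S y)) => [/same // | nxy].
    pose R := fun a b => (a == b) || ([exists u, qmap S u == b] &&
       [forall u, forall w, (qmap S u == a) ==> (qmap S w == b) ==>
           connect (adj (ends G) (B :|: C)) u w]).
    suff HR : R (qmap S x) (qmap S y).
      move: HR; rewrite /R (negbTE nxy) /= => /andP [_ /forallP /(_ x) /forallP /(_ y)].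
      by rewrite !eqxx.
    move: (spB _ _ (qmapV x) (qmapV y)); apply: connect_closed.
    + by move=> a; rewrite /R eqxx.
    + move=> b a c; rewrite /R => /orP [/eqP -> // | /andP [Eb /forallP Hab]].
      move=> /orP [/eqP <- | /andP [/existsP [z zb] /forallP Hbc]].
        by apply/orP; right; apply/andP; split; [|apply/forallP].
      apply/orP; right; apply/andP; split; first by apply/existsP; exists z.
      apply/forallP => u; apply/forallP => w; apply/implyP => ua; apply/implyP => wc.
      case/existsP: Eb => m mb.
      apply: (connect_trans (y := m)).
        by move: (Hab u) => /forallP /(_ m) /implyP /(_ ua) /implyP /(_ mb).
      by move: (Hbc m) => /forallP /(_ w) /implyP /(_ mb) /implyP /(_ wc).
    move=> a b /existsP [e /andP [eB H]].
    have key : forall p q, quot_ends G S e = (p, q) ->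
        exists2 u, qmap S u = p & exists2 w, qmap S w = q &
          adj (ends G) (B :|: C) u w.
      move=> p q; rewrite /quot_ends => [[<- <-]].
      exists (ends G e).1 => //; exists (ends G e).2 => //.
      apply/existsP; exists e; rewrite inE eB /=.
      by case: (ends G e) => ? ? /=; rewrite eqxx.
    have keysym : forall p q, quot_ends G S e = (p, q) ->
        exists2 u, qmap S u = q & exists2 w, qmap S w = p &
          adj (ends G) (B :|: C) u w.
      move=> p q /key [u up [w wq /existsP [f /andP [fB Hf]]]].
      exists w => //; exists u => //; apply/existsP; exists f; rewrite fB /=.
      by rewrite orbC.
    have [u ua [w wb uw]] : exists2 u, qmap S u = a & exists2 w, qmap S w = b &
          adj (ends G) (B :|: C) u w.
      by case/orP: H => /eqP /[dup] Q; [move/key | move/keysym].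
    apply/orP; right; apply/andP; split; first by apply/existsP; exists w; rewrite wb.
    apply/forallP => u'; apply/forallP => w'; apply/implyP => /eqP u'a;
      apply/implyP => /eqP w'b.
    apply: (connect_trans (y := u)); first by apply: same; rewrite u'a ua.
    apply: (connect_trans (y := w)); first by apply: connect1.
    by apply: same; rewrite wb w'b.
  apply/dc_onP; split; first by apply/set0Pn; exists s0.
  exists (B1 :|: C1), (B2 :|: C2); split; last by split; apply: bw.
  split; try by apply: subsetT.
    apply/pred0P => e /=.
    case e1: (e \in B1 :|: C1) => //=; apply/negbTE.
    move: e1; rewrite !inE => /orP [eB1 | eC1].
      have eq1 : e \in quot_edges G S := subsetP sB1 _ eB1.
      rewrite (disjointFr dB eB1) /=; apply/negP => eC2.
      by move: eq1; rewrite inE (subsetP sC2 _ eC2).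
    rewrite (disjointFr dC eC1) orbF; apply/negP => eB2.
    by move: (subsetP sB2 _ eB2); rewrite inE (subsetP sC1 _ eC1).
  by move=> e; rewrite inE => /orP [/dfB | /dfC].
Qed.
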